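(* Let $n\ge3$ and let $L^B$ be a blow-up of $L\cong\mathbf{2}^n$. Let $x,y$ be vertices of $G(L^B)$ with $[x]\neq[y]$. If $x$ and $y$ are comparable, or if $x\wedge y=0$, then $x$ and $y$ are not mutually maximally distant in $G(L^B)$.
   Context: Blow-up: for the Boolean lattice $L\cong\mathbf{2}^n$ with atoms $q_1,\dots,q_n$, replace each $a\in L\setminus\{0,1\}$ by a finite chain $C_a$: $a=a^1\lessdot\cdots\lessdot a^{k_a}$ ($k_a\ge 1$), keep $0,1$; elements of one chain are ordered along it, and for $u\in C_a,v\in C_b$ with $a\ne b$ ($C_0=\{0\},C_1=\{1\}$), $u\le v$ iff $a<b$ in $L$. $G(L^B)$ is the zero-divisor graph: vertices are nonzero $a\in L^B$ having some nonzero $b$ with $a\wedge b=0$, distinct vertices adjacent iff their meet is $0$. $[x]$ denotes the class of $x$ under $x\sim y\iff x^\perp=y^\perp$, where $x^\perp=\{z: x\wedge z=0\}$. In a graph, $u$ is maximally distant from $v$ if $d(v,w)\le d(u,v)$ for every neighbour $w$ of $u$; $u,v$ are mutually maximally distant if each is maximally distant from the other. *)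

(* Defs.v *)
From mathcomp Require Import all_boot.
Set Implicit Arguments. Unset Strict Implicit. Unset Printing Implicit Defensive.

(* An element of the blow-up L^B is encoded as a pair (a, i): the i-th element
   a^(i+1) of the chain C_a (0-based index).  The chain length function is
   k : {set 'I_n} -> nat; for a = 0 (set0) or a = 1 (setT) the chain is a
   single element, index 0. *)
Definition BU (n : nat) := ({set 'I_n} * nat)%type.

Definition bu_trivial n (a : {set 'I_n}) : bool := (a == set0) || (a == [set: 'I_n]).

Definition bu_valid n (k : {set 'I_n} -> nat) (u : BU n) : bool :=
  if bu_trivial u.1 then u.2 == 0 else u.2 < k u.1.

Definition bu_zero n : BU n := (set0, 0).

Definition bu_le n (u v : BU n) : bool :=
  ((u.1 == v.1) && (u.2 <= v.2)) || (u.1 \proper v.1).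

Definition bu_top n (k : {set 'I_n} -> nat) (c : {set 'I_n}) : nat :=
  if bu_trivial c then 0 else (k c).-1.

Definition bu_meet n (k : {set 'I_n} -> nat) (u v : BU n) : BU n :=
  if u.1 == v.1 then (u.1, minn u.2 v.2)
  else if u.1 \subset v.1 then u
  else if v.1 \subset u.1 then v
  else (u.1 :&: v.1, bu_top k (u.1 :&: v.1)).

Definition is_vertex n k (x : BU n) : Prop :=
  bu_valid k x /\ x <> bu_zero n /\
  exists y, bu_valid k y /\ y <> bu_zero n /\ bu_meet k x y = bu_zero n.

Definition adj n k (x y : BU n) : Prop :=
  is_vertex k x /\ is_vertex k y /\ x <> y /\ bu_meet k x y = bu_zero n.

Fixpoint within n k (m : nat) (u v : BU n) : Prop :=
  match m with
  | 0 => u = v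
  | m'.+1 => u = v \/ exists w, adj k u w /\ within k m' w v
  end.

(* u is maximally distant from v: d(v,w) <= d(u,v) for every neighbour w of u *)
Definition max_distant n k (u v : BU n) : Prop :=
  forall w, adj k u w -> forall m, within k m u v -> within k m w v.

Definition mutually_max_distant n k (u v : BU n) : Prop :=
  max_distant k u v /\ max_distant k v u.

(* x ~ y  iff  x^perp = y^perp (in L^B) *)
Definition perp_equiv n k (x y : BU n) : Prop :=
  forall z, bu_valid k z -> (bu_meet k x z = bu_zero n <-> bu_meet k y z = bu_zero n).

(* Main.v *)
Require Import Defs.
From mathcomp Require Import all_boot.
From mathcomp Require Import zify.

Section Aux.
Variables (n : nat) (k : {set 'I_n} -> nat).
Hypothesis hk : forall a : {set 'I_n}, a != set0 -> a != [set: 'I_n] -> 0 < k a.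

Lemma valid_set0 {i} {c : {set 'I_n}} : bu_valid k (c, i) -> c = set0 -> i = 0.
Proof. by move=> v E; move: v; rewrite /bu_valid /bu_trivial E eqxx /= => /eqP. Qed.

Lemma meet0 {a b : {set 'I_n}} {i j} : bu_valid k (a,i) -> bu_valid k (b,j) ->
  (bu_meet k (a,i) (b,j) = bu_zero n) <-> (a :&: b = set0).
Proof.
move=> va vb; rewrite /bu_meet /bu_zero /=.
case: eqP => [<-|nab].
  rewrite setIid; split; first by case=> ->.
  by move=> E; rewrite (valid_set0 va E) E min0n.
case: ifP => [sab|nsab].
  rewrite (setIidPl sab); split; first by case=> ->.
  by move=> E; rewrite (valid_set0 va E) E.
case: ifP => [sba|nsba].
  rewrite (setIidPr sba); split; first by case=> ->.
  by move=> E; rewrite (valid_set0 vb E) E.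
split; first by case=> ->.
by move=> E; rewrite E /bu_top /bu_trivial eqxx.
Qed.

Lemma valid0 (c : {set 'I_n}) : bu_valid k (c, 0).
Proof.
rewrite /bu_valid /bu_trivial; case: ifP => // /norP [h1 h2]; exact: hk.
Qed.

Lemma vertexP (c : {set 'I_n}) i :
  is_vertex k (c, i) <-> [/\ bu_valid k (c, i), c != set0 & c != setT].
Proof.
split.
  move=> [v [nz [[d l] [vd [nzd md]]]]]; split => //.
    apply/eqP => E; apply: nz; by rewrite /bu_zero E (valid_set0 v E).
  apply/eqP => E; move/(meet0 v vd): md; rewrite E setTI => Ed.
  by apply: nzd; rewrite /bu_zero Ed (valid_set0 vd Ed).
move=> [v c0 cT]; split => //; split.
  by rewrite /bu_zero => -[E _]; rewrite E eqxx in c0.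
exists (~: c, 0); split; first exact: valid0.
split; first by rewrite /bu_zero => -[E]; move: cT; rewrite -(setCK c) E setC0 eqxx.
by apply/(meet0 v (valid0 _)); rewrite setICr.
Qed.

Lemma vertex_valid {x} : is_vertex k x -> bu_valid k x.
Proof. by case. Qed.

Lemma setIC0 (a b : {set 'I_n}) : a :&: b = set0 -> b :&: a = set0.
Proof. by rewrite setIC. Qed.

Lemma L1 (a b c : {set 'I_n}) i j :
  is_vertex k (a, i) -> is_vertex k (b, j) -> a :&: b = set0 ->
  c :&: a = set0 -> c :&: b != set0 -> c != set0 -> c != setT ->
  (c, 0) <> (b, j) -> ~ max_distant k (a, i) (b, j).
Proof.
move=> xv yv ab ca cb c0 cT wy md.
have va := vertex_valid xv; have vb := vertex_valid yv.
have wv : is_vertex k (c, 0) by apply/vertexP; split => //; exact: valid0.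
have adjxw : adj k (a, i) (c, 0).
  split => //; split => //; split.
    move=> [E _]; move: cb; rewrite -E ab eqxx //.
  by apply/(meet0 va (valid0 _)); rewrite setIC.
have := md _ adjxw 1.
case.
  by right; exists (b, j); split => //; split => //; split => //; split;
    [move=> E; move: ab; case: E => <- _; rewrite setIid => E; move: xv => /vertexP [_ ];
     rewrite E eqxx | apply/(meet0 va vb)].
  by [].
move=> [z [[_ [_ [_ mz]]] E]]; subst z.
by move/(meet0 (valid0 _) vb): mz => E; rewrite E eqxx in cb.
Qed.

Lemma L2 (a b : {set 'I_n}) i j :
  is_vertex k (a, i) -> is_vertex k (b, j) -> a \proper b ->
  ~ max_distant k (a, i) (b, j).
Proof.
move=> xv yv ab md.
have va := vertex_valid xv; have vb := vertex_valid yv.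
move/vertexP: (xv) => [_ a0 aT]; move/vertexP: (yv) => [_ b0 bT].
have sab := proper_sub ab.
have wv : is_vertex k (~: a, 0).
  apply/vertexP; split; first exact: valid0.
    by apply/eqP => E; move: aT; rewrite -(setCK a) E setC0 eqxx.
  by apply/eqP => E; move: a0; rewrite -(setCK a) E setCT eqxx.
have zv : is_vertex k (~: b, 0).
  apply/vertexP; split; first exact: valid0.
    by apply/eqP => E; move: bT; rewrite -(setCK b) E setC0 eqxx.
  by apply/eqP => E; move: b0; rewrite -(setCK b) E setCT eqxx.
have adjxw : adj k (a, i) (~: a, 0).
  split => //; split => //; split; last by apply/(meet0 va (valid0 _)); rewrite setICr.
  move=> [E _]; move: a0; rewrite -(setIid a) {2}E setICr eqxx //.
have := md _ adjxw 2.
case.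
  right; exists (~: b, 0); split.
    split => //; split => //; split.
      move=> [E _]; move: a0; have := setIidPl sab; rewrite {1}E setIC setICr => <-.
      by rewrite eqxx.
    by apply/(meet0 va (valid0 _)); apply/eqP; rewrite -setDE setD_eq0.
  right; exists (b, j); split => //; split => //; split => //; split => //.
    move=> [E _]; move: b0; have := setICr b; rewrite E setIid => ->.
    by rewrite eqxx.
  by apply/(meet0 (valid0 _) vb); rewrite setIC setICr.
  move=> [E _]; move: a0; rewrite -(setIidPl sab) -E setICr eqxx //.
move=> [z [[_ [zv' [nwz mwz]]] [E | [z' [[_ [_ [_ mzz]]] E]]]]].
  subst z; move/(meet0 (valid0 _) vb): mwz => E.
  move: ab; rewrite properEneq => /andP [/eqP nab _]; apply: nab.
  apply/eqP; rewrite eqEsubset sab /=.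
  by rewrite -setD_eq0 setDE setIC E.
subst z'; clear nwz; case: z zv' mwz mzz => c l zv' mwz mzz.
move/vertexP: (zv') => [vc c0 _].
move/(meet0 (valid0 _) vc): mwz => h1; move/(meet0 vc vb): mzz => h2.
have sca : c \subset a by rewrite -setD_eq0 setDE setIC h1.
have scb : c \subset b := subset_trans sca sab.
by move: c0; rewrite -(setIidPl scb) h2 eqxx.
Qed.

Lemma L3 (a b : {set 'I_n}) i j :
  is_vertex k (a, i) -> is_vertex k (b, j) -> b = ~: a -> 1 < #|b| ->
  ~ max_distant k (a, i) (b, j).
Proof.
move=> xv yv Eb cb.
move/vertexP: (xv) => [va a0 aT]; move/vertexP: (yv) => [vb b0 bT].
have [e eb] : exists e, e \in b by apply/set0Pn.
have [f fa] : exists f, f \in a by apply/set0Pn.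
have ab : a :&: b = set0 by rewrite Eb setICr.
apply: (L1 a b [set e] i j) => //.
- apply/setP => x; rewrite !inE; apply/negbTE/andP => -[/eqP -> ea].
  by move: eb; rewrite Eb inE ea.
- by apply/set0Pn; exists e; rewrite !inE eqxx eb.
- by apply/set0Pn; exists e; rewrite inE.
- apply/eqP => E; have : f \in [set e] by rewrite E inE.
  rewrite inE => /eqP fe; subst f.
  by move: eb; rewrite Eb inE fa.
- by case => E _; move: cb; rewrite -E cards1.
Qed.

End Aux.
Arguments meet0 {n k a b i j}.

Theorem mainTheorem5 (n : nat) (k : {set 'I_n} -> nat) (hn : 3 <= n)
    (hk : forall a : {set 'I_n}, a != set0 -> a != [set: 'I_n] -> 0 < k a)
    (x y : BU n) :
  is_vertex k x -> is_vertex k y -> ~ perp_equiv k x y ->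
  (bu_le x y \/ bu_le y x \/ bu_meet k x y = bu_zero n) ->
  ~ mutually_max_distant k x y.
Proof.
case: x => a i; case: y => b j.
move=> xv yv np cmp [mxy myx].
move/(@vertexP n k hk _ _): (xv) => [va a0 aT]; move/(@vertexP n k hk _ _): (yv) => [vb b0 bT].
have nab : a != b.
  apply/eqP => E; apply: np; subst b => -[c l] vz.
  split => h; first by apply/(meet0 vb vz); apply/(meet0 va vz).
  by apply/(meet0 va vz); apply/(meet0 vb vz).
case: cmp => [le|[le|m]].
- rewrite /bu_le /= (negbTE nab) /= in le.
  exact: (@L2 n k hk _ _ _ _ xv yv le mxy).
- rewrite /bu_le /= eq_sym (negbTE nab) /= in le.
  exact: (@L2 n k hk _ _ _ _ yv xv le myx).
have ab := (meet0 va vb).1 m.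
case: (b =P ~: a) => [Eb|nb].
  have hc : #|a| + #|b| = n by rewrite Eb cardsC card_ord.
  case: (leqP 2 #|b|) => hb.
    exact: (@L3 n k hk _ _ _ _ xv yv Eb hb mxy).
  have ha : 1 < #|a| by move: hn hb hc; lia.
  have Ea : a = ~: b by rewrite Eb setCK.
  exact: (@L3 n k hk _ _ _ _ yv xv Ea ha myx).
have sb : b \subset ~: a by rewrite -setD_eq0 setDE setCK setIC ab.
apply: (@L1 n k hk a b (~: a) i j xv yv ab _ _ _ _ _ mxy).
- by rewrite setIC setICr.
- by rewrite (setIidPr sb).
- by apply/eqP => E; move: aT; rewrite -(setCK a) E setC0 eqxx.
- by apply/eqP => E; move: a0; rewrite -(setCK a) E setCT eqxx.
- by case => E _; apply: nb.
Qed.
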